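(* Let $G$ be a structured quadratic-bilinear system given by $(\mathcal C,\mathcal K,\mathcal B,\mathcal N,\mathcal H)$ with structured symmetric subsystem transfer functions $G_k$, and $\widehat G$ the reduced-order system obtained by projection with $V,W\in\mathbb C^{n\times r}$ of full column rank, with reduced symmetric subsystem transfer functions $\widehat G_k$. Let $\sigma\in\mathbb C$ be such that $\mathcal C,\mathcal K,\mathcal B,\mathcal N$ can be evaluated at $\sigma,2\sigma,3\sigma$, $\mathcal H$ at $(\sigma,\sigma),(2\sigma,\sigma),(\sigma,2\sigma)$, and $\mathcal K(\sigma),\mathcal K(2\sigma),\mathcal K(3\sigma)$ are invertible; assume also that $W^{\mathsf H}\mathcal K(s)V$ is invertible for $s\in\{\sigma,2\sigma,3\sigma\}$. Define $$V_1=\mathcal K(\sigma)^{-1}\mathcal B(\sigma),\qquad V_2=\mathcal K(2\sigma)^{-1}\big(\mathcal H(\sigma,\sigma)(V_1\otimes V_1)+\mathcal N(\sigma)(I_m\otimes V_1)\big),$$ $$V_3=\mathcal K(3\sigma)^{-1}\big(\mathcal H(2\sigma,\sigma)(V_2\otimes V_1)+\mathcal H(\sigma,2\sigma)(V_1\otimes V_2)+\mathcal N(2\sigma)(I_m\otimes V_2)\big),$$ $$W_1=\mathcal K(2\sigma)^{-\mathsf H}\mathcal C(2\sigma)^{\mathsf H},\qquad W_2=\mathcal K(3\sigma)^{-\mathsf H}\mathcal C(3\sigma)^{\mathsf H}.$$ Then: (a) If $\operatorname{span}(V)\supseteq\operatorname{span}([V_1\ V_2\ V_3])$ (and $W$ is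 any full-rank matrix of the same size as $V$), then $G_1(\sigma)=\widehat G_1(\sigma)$, $G_2(\sigma,\sigma)=\widehat G_2(\sigma,\sigma)$, $G_3(\sigma,\sigma,\sigma)=\widehat G_3(\sigma,\sigma,\sigma)$. (b) If $\operatorname{span}(V)\supseteq\operatorname{span}(V_1)$ and $\operatorname{span}(W)\supseteq\operatorname{span}(W_1)$, then $G_1(\sigma)=\widehat G_1(\sigma)$, $G_1(2\sigma)=\widehat G_1(2\sigma)$, $G_2(\sigma,\sigma)=\widehat G_2(\sigma,\sigma)$. (c) If $\operatorname{span}(V)\supseteq\operatorname{span}([V_1\ V_2])$ and $\operatorname{span}(W)\supseteq\operatorname{span}(W_2)$, then $G_1(\sigma)=\widehat G_1(\sigma)$, $G_1(3\sigma)=\widehat G_1(3\sigma)$, $G_2(\sigma,\sigma)=\widehat G_2(\sigma,\sigma)$, $G_3(\sigma,\sigma,\sigma)=\widehat G_3(\sigma,\sigma,\sigma)$.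
   Context: A structured quadratic-bilinear system (in frequency domain) with $n$ states, $m$ inputs and $p$ outputs is given by matrix-valued functions $\mathcal C:\mathbb C\to\mathbb C^{p\times n}$, $\mathcal K:\mathbb C\to\mathbb C^{n\times n}$, $\mathcal B:\mathbb C\to\mathbb C^{n\times m}$, $\mathcal N:\mathbb C\to\mathbb C^{n\times nm}$ with $\mathcal N(s)=[\mathcal N_1(s)\ \cdots\ \mathcal N_m(s)]$, $\mathcal N_j(s)\in\mathbb C^{n\times n}$, and $\mathcal H:\mathbb C\times\mathbb C\to\mathbb C^{n\times n^2}$. Its structured symmetric subsystem transfer functions are $G_1(s_1)=\mathcal C(s_1)g_1(s_1)$, $G_2(s_1,s_2)=\mathcal C(s_1+s_2)g_2(s_1,s_2)$, $G_3(s_1,s_2,s_3)=\mathcal C(s_1+s_2+s_3)g_3(s_1,s_2,s_3)$, where $g_1(s_1)=\mathcal K(s_1)^{-1}\mathcal B(s_1)$, $g_2(s_1,s_2)=\tfrac12\mathcal K(s_1+s_2)^{-1}\big(\mathcal H(s_1,s_2)(g_1(s_1)\otimes g_1(s_2))+\mathcal H(s_2,s_1)(g_1(s_2)\otimes g_1(s_1))+\mathcal N(s_1)(I_m\otimes g_1(s_1))+\mathcal N(s_2)(I_m\otimes g_1(s_2))\big)$, $g_3(s_1,s_2,s_3)=\tfrac16\mathcal K(s_1+s_2+s_3)^{-1}\big(\mathcal H(s_1+s_2,s_3)(g_2(s_1,s_2)\otimes g_1(s_3))+\mathcal H(s_1+s_3,s_2)(g_2(s_1,s_3)\otimes g_1(s_2))+\mathcal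 H(s_2+s_3,s_1)(g_2(s_2,s_3)\otimes g_1(s_1))+\mathcal H(s_1,s_2+s_3)(g_1(s_1)\otimes g_2(s_2,s_3))+\mathcal H(s_2,s_1+s_3)(g_1(s_2)\otimes g_2(s_1,s_3))+\mathcal H(s_3,s_1+s_2)(g_1(s_3)\otimes g_2(s_1,s_2))+\mathcal N(s_1+s_2)(I_m\otimes g_2(s_1,s_2))+\mathcal N(s_1+s_3)(I_m\otimes g_2(s_1,s_3))+\mathcal N(s_2+s_3)(I_m\otimes g_2(s_2,s_3))\big)$, wherever the inverses exist; $\otimes$ is the Kronecker product. The reduced-order system obtained by projection with $V,W\in\mathbb C^{n\times r}$ is given by $\widehat{\mathcal C}(s)=\mathcal C(s)V$, $\widehat{\mathcal K}(s)=W^{\mathsf H}\mathcal K(s)V$, $\widehat{\mathcal B}(s)=W^{\mathsf H}\mathcal B(s)$, $\widehat{\mathcal N}(s)=W^{\mathsf H}\mathcal N(s)(I_m\otimes V)$, $\widehat{\mathcal H}(s_1,s_2)=W^{\mathsf H}\mathcal H(s_1,s_2)(V\otimes V)$, where $W^{\mathsf H}$ is the conjugate transpose and $\mathcal K(s)^{-\mathsf H}=(\mathcal K(s)^{-1})^{\mathsf H}$; its transfer functions $\widehat G_k$ are defined by the same formulas with hatted functions. *)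

(* Defs.v *)
From HB Require Import structures.
From mathcomp Require Import all_boot all_order all_algebra.
From mathcomp Require Import mxtens.
Set Implicit Arguments. Unset Strict Implicit. Unset Printing Implicit Defensive.
Import Order.TTheory GRing.Theory Num.Theory.
Local Open Scope ring_scope.

(* Complex scalars: any numeric closed field C (e.g. algC, or complex R);
   conjugation is Num.conj (written z^* ). *)

Definition ctmx (C : numClosedFieldType) (m n : nat) (A : 'M[C]_(m, n)) : 'M[C]_(n, m) :=
  (map_mx Num.conj A)^T.

(* Kronecker product: (A *t B) with row/column index i1 * p + i2 (standard
   convention), from mathcomp-real-closed's mxtens. *)

Definition colspan_sub (C : fieldType) (n a b : nat)
  (A : 'M[C]_(n, a)) (B : 'M[C]_(n, b)) : Prop := (A^T <= B^T)%MS.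

Section QB.
Variable (C : numClosedFieldType) (n m p : nat).
Variable (Cf : C -> 'M[C]_(p, n)) (Kf : C -> 'M[C]_n) (Bf : C -> 'M[C]_(n, m))
         (Nf : C -> 'M[C]_(n, m * n)) (Hf : C -> C -> 'M[C]_(n, n * n)).

Definition g1 (s1 : C) : 'M[C]_(n, m) := invmx (Kf s1) *m Bf s1.

Definition g2 (s1 s2 : C) : 'M[C]_(n, m * m) :=
  (2%:R)^-1 *: (invmx (Kf (s1 + s2)) *m
    (Hf s1 s2 *m (g1 s1 *t g1 s2) + Hf s2 s1 *m (g1 s2 *t g1 s1)
     + Nf s1 *m (1%:M *t g1 s1) + Nf s2 *m (1%:M *t g1 s2))).

(* identification of the column index sets m * (m * m) and m * m * m;
   castmx preserves the numerical index, as in the paper *)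
Definition cast3 (A : 'M[C]_(n, m * (m * m))) : 'M[C]_(n, m * m * m) :=
  castmx (erefl n, mulnA m m m) A.

Definition g3 (s1 s2 s3 : C) : 'M[C]_(n, m * m * m) :=
  (6%:R)^-1 *: (invmx (Kf (s1 + s2 + s3)) *m
    (Hf (s1 + s2) s3 *m (g2 s1 s2 *t g1 s3)
     + Hf (s1 + s3) s2 *m (g2 s1 s3 *t g1 s2)
     + Hf (s2 + s3) s1 *m (g2 s2 s3 *t g1 s1)
     + cast3 (Hf s1 (s2 + s3) *m (g1 s1 *t g2 s2 s3))
     + cast3 (Hf s2 (s1 + s3) *m (g1 s2 *t g2 s1 s3))
     + cast3 (Hf s3 (s1 + s2) *m (g1 s3 *t g2 s1 s2))
     + cast3 (Nf (s1 + s2) *m (1%:M *t g2 s1 s2))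
     + cast3 (Nf (s1 + s3) *m (1%:M *t g2 s1 s3))
     + cast3 (Nf (s2 + s3) *m (1%:M *t g2 s2 s3)))).

Definition G1 (s1 : C) : 'M[C]_(p, m) := Cf s1 *m g1 s1.
Definition G2 (s1 s2 : C) : 'M[C]_(p, m * m) := Cf (s1 + s2) *m g2 s1 s2.
Definition G3 (s1 s2 s3 : C) : 'M[C]_(p, m * m * m) :=
  Cf (s1 + s2 + s3) *m g3 s1 s2 s3.
End QB.

Section Reduced.
Variable (C : numClosedFieldType) (n m p r : nat).
Variable (V W : 'M[C]_(n, r)).
Variable (Cf : C -> 'M[C]_(p, n)) (Kf : C -> 'M[C]_n) (Bf : C -> 'M[C]_(n, m))
         (Nf : C -> 'M[C]_(n, m * n)) (Hf : C -> C -> 'M[C]_(n, n * n)).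
Definition redC (s : C) : 'M[C]_(p, r) := Cf s *m V.
Definition redK (s : C) : 'M[C]_r := ctmx W *m Kf s *m V.
Definition redB (s : C) : 'M[C]_(r, m) := ctmx W *m Bf s.
Definition redN (s : C) : 'M[C]_(r, m * r) :=
  ctmx W *m Nf s *m (1%:M *t V : 'M[C]_(m * n, m * r)).
Definition redH (s1 s2 : C) : 'M[C]_(r, r * r) := ctmx W *m Hf s1 s2 *m (V *t V).
End Reduced.

Section Interp.
Variable (C : numClosedFieldType) (n m p : nat).
Variable (Cf : C -> 'M[C]_(p, n)) (Kf : C -> 'M[C]_n) (Bf : C -> 'M[C]_(n, m))
         (Nf : C -> 'M[C]_(n, m * n)) (Hf : C -> C -> 'M[C]_(n, n * n)).
Variable sigma : C.
Definition Vi1 : 'M[C]_(n, m) := invmx (Kf sigma) *m Bf sigma.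
Definition Vi2 : 'M[C]_(n, m * m) :=
  invmx (Kf (2%:R * sigma)) *m
   (Hf sigma sigma *m (Vi1 *t Vi1) + Nf sigma *m (1%:M *t Vi1)).
Definition Vi3 : 'M[C]_(n, m * m * m) :=
  invmx (Kf (3%:R * sigma)) *m
   (Hf (2%:R * sigma) sigma *m (Vi2 *t Vi1)
    + cast3 (Hf sigma (2%:R * sigma) *m (Vi1 *t Vi2))
    + cast3 (Nf (2%:R * sigma) *m (1%:M *t Vi2))).
Definition Wi1 : 'M[C]_(n, p) := ctmx (invmx (Kf (2%:R * sigma))) *m ctmx (Cf (2%:R * sigma)).
Definition Wi2 : 'M[C]_(n, p) := ctmx (invmx (Kf (3%:R * sigma))) *m ctmx (Cf (3%:R * sigma)).
End Interp.

(* Main.v *)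
Require Import Defs.
From HB Require Import structures.
From mathcomp Require Import all_boot all_order all_algebra.
From mathcomp Require Import mxtens.
Import Order.TTheory GRing.Theory Num.Theory.
Local Open Scope ring_scope.
Set Implicit Arguments. Unset Strict Implicit.

Section H.
Variable C : numClosedFieldType.

Lemma ctmxM (a b c : nat) (A : 'M[C]_(a,b)) (B : 'M[C]_(b,c)) :
  ctmx (A *m B) = ctmx B *m ctmx A.
Proof. by rewrite /ctmx map_mxM trmx_mul. Qed.

Lemma ctmxK (a b : nat) (A : 'M[C]_(a,b)) : ctmx (ctmx A) = A.
Proof. by apply/matrixP=> i j; rewrite !mxE conjCK. Qed.

Lemma colspanP (n a b : nat) (A : 'M[C]_(n,a)) (B : 'M[C]_(n,b)) :
  colspan_sub A B -> exists X, A = B *m X.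
Proof.
move=> /submxP [D HD]; exists D^T.
by rewrite -(trmxK A) HD trmx_mul trmxK.
Qed.

Lemma L1 (n r q : nat) (K : 'M[C]_n) (V W : 'M[C]_(n, r)) (f : 'M[C]_(n, q)) X :
  K \in unitmx -> ctmx W *m K *m V \in unitmx ->
  invmx K *m f = V *m X ->
  V *m (invmx (ctmx W *m K *m V) *m (ctmx W *m f)) = invmx K *m f.
Proof.
move=> uK uKr e.
have -> : ctmx W *m f = (ctmx W *m K *m V) *m X.
  by rewrite -!mulmxA -e mulKVmx.
by rewrite mulKmx.
Qed.

Lemma L2 (n r q p : nat) (K : 'M[C]_n) (V W : 'M[C]_(n, r)) (f : 'M[C]_(n, q))
  (Cm : 'M[C]_(p, n)) Z :
  K \in unitmx -> ctmx W *m K *m V \in unitmx ->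
  ctmx (invmx K) *m ctmx Cm = W *m Z ->
  Cm *m V *m (invmx (ctmx W *m K *m V) *m (ctmx W *m f)) = Cm *m (invmx K *m f).
Proof.
move=> uK uKr e.
have eC : Cm *m invmx K = ctmx Z *m ctmx W.
  by rewrite -ctmxM -e ctmxM !ctmxK.
have -> : Cm *m V = ctmx Z *m (ctmx W *m K *m V).
  by rewrite -[Cm]mulmx1 -(mulVmx uK) !mulmxA eC -!mulmxA.
by rewrite -mulmxA mulKVmx // mulmxA -eC mulmxA.
Qed.

Lemma cast3M (n k m : nat) (A : 'M[C]_(n,k)) (B : 'M[C]_(k, m * (m * m))) :
  cast3 (A *m B) = A *m cast3 B.
Proof. by rewrite /cast3 castmx_mul castmx_id. Qed.

Lemma cast3D (n m : nat) (A B : 'M[C]_(n, m * (m * m))) :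
  cast3 (A + B) = cast3 A + cast3 B.
Proof. by apply/matrixP=> i j; rewrite !(castmxE, mxE). Qed.

Lemma cast3Z (n m : nat) c (A : 'M[C]_(n, m * (m * m))) :
  cast3 (c *: A) = c *: cast3 A.
Proof. by apply/matrixP=> i j; rewrite !(castmxE, mxE). Qed.

Section Rhs.
Variable (n m : nat).
Variable (Kf : C -> 'M[C]_n) (Bf : C -> 'M[C]_(n, m))
         (Nf : C -> 'M[C]_(n, m * n)) (Hf : C -> C -> 'M[C]_(n, n * n)).

Definition rhs2 (s1 s2 : C) : 'M[C]_(n, m * m) :=
    (Hf s1 s2 *m (g1 Kf Bf s1 *t g1 Kf Bf s2) + Hf s2 s1 *m (g1 Kf Bf s2 *t g1 Kf Bf s1)
     + Nf s1 *m (1%:M *t g1 Kf Bf s1) + Nf s2 *m (1%:M *t g1 Kf Bf s2)).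

Lemma g2E s1 s2 : g2 Kf Bf Nf Hf s1 s2 = 2%:R^-1 *: (invmx (Kf (s1 + s2)) *m rhs2 s1 s2).
Proof. by []. Qed.

Definition rhs3 (s1 s2 s3 : C) : 'M[C]_(n, m * m * m) :=
    (Hf (s1 + s2) s3 *m (g2 Kf Bf Nf Hf s1 s2 *t g1 Kf Bf s3)
     + Hf (s1 + s3) s2 *m (g2 Kf Bf Nf Hf s1 s3 *t g1 Kf Bf s2)
     + Hf (s2 + s3) s1 *m (g2 Kf Bf Nf Hf s2 s3 *t g1 Kf Bf s1)
     + cast3 (Hf s1 (s2 + s3) *m (g1 Kf Bf s1 *t g2 Kf Bf Nf Hf s2 s3))
     + cast3 (Hf s2 (s1 + s3) *m (g1 Kf Bf s2 *t g2 Kf Bf Nf Hf s1 s3))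
     + cast3 (Hf s3 (s1 + s2) *m (g1 Kf Bf s3 *t g2 Kf Bf Nf Hf s1 s2))
     + cast3 (Nf (s1 + s2) *m (1%:M *t g2 Kf Bf Nf Hf s1 s2))
     + cast3 (Nf (s1 + s3) *m (1%:M *t g2 Kf Bf Nf Hf s1 s3))
     + cast3 (Nf (s2 + s3) *m (1%:M *t g2 Kf Bf Nf Hf s2 s3))).

Lemma g3E s1 s2 s3 : g3 Kf Bf Nf Hf s1 s2 s3 =
  6%:R^-1 *: (invmx (Kf (s1 + s2 + s3)) *m rhs3 s1 s2 s3).
Proof. by []. Qed.
End Rhs.
Section Red.
Variable (n m r : nat) (V W : 'M[C]_(n, r)).
Variable (Kf : C -> 'M[C]_n) (Bf : C -> 'M[C]_(n, m))
         (Nf : C -> 'M[C]_(n, m * n)) (Hf : C -> C -> 'M[C]_(n, n * n)).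

Lemma tH a b (q1 q2 : nat) (X : 'M[C]_(r, q1)) (Y : 'M[C]_(r, q2)) :
  redH V W Hf a b *m (X *t Y) = ctmx W *m (Hf a b *m ((V *m X) *t (V *m Y))).
Proof. by rewrite /redH -!mulmxA tensmx_mul. Qed.

Lemma tN a (q : nat) (X : 'M[C]_(r, q)) :
  redN V W Nf a *m (1%:M *t X) = ctmx W *m (Nf a *m (1%:M *t (V *m X))).
Proof. by rewrite /redN -!mulmxA tensmx_mul mul1mx. Qed.

Lemma rhs2_red s1 s2 :
  V *m g1 (redK V W Kf) (redB W Bf) s1 = g1 Kf Bf s1 ->
  V *m g1 (redK V W Kf) (redB W Bf) s2 = g1 Kf Bf s2 ->
  rhs2 (redK V W Kf) (redB W Bf) (redN V W Nf) (redH V W Hf) s1 s2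
  = ctmx W *m rhs2 Kf Bf Nf Hf s1 s2.
Proof.
move=> e1 e2.
rewrite /rhs2 !tH !tN e1 e2.
by rewrite -!mulmxDr.
Qed.

Lemma tH' a b (q1 q2 : nat) (X : 'M[C]_(r, q1)) (Y : 'M[C]_(r, q2)) X' Y' :
  V *m X = X' -> V *m Y = Y' ->
  redH V W Hf a b *m (X *t Y) = ctmx W *m (Hf a b *m (X' *t Y')).
Proof. by move=> <- <-; exact: tH. Qed.

Lemma tN' a (q : nat) (X : 'M[C]_(r, q)) X' : V *m X = X' ->
  redN V W Nf a *m (1%:M *t X) = ctmx W *m (Nf a *m (1%:M *t X')).
Proof. by move=> <-; exact: tN. Qed.

Lemma tHc' a b (X : 'M[C]_(r, m)) (Y : 'M[C]_(r, m * m)) X' Y' :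
  V *m X = X' -> V *m Y = Y' ->
  cast3 (redH V W Hf a b *m (X *t Y)) = ctmx W *m cast3 (Hf a b *m (X' *t Y')).
Proof. by move=> <- <-; rewrite tH cast3M. Qed.

Lemma tNc' a (X : 'M[C]_(r, m * m)) X' : V *m X = X' ->
  cast3 (redN V W Nf a *m (1%:M *t X)) = ctmx W *m cast3 (Nf a *m (1%:M *t X')).
Proof. by move=> <-; rewrite tN cast3M. Qed.

Lemma sum9 (a b c : nat) (A : 'M[C]_(a, b)) (x1 x2 x3 x4 x5 x6 x7 x8 x9 : 'M[C]_(a, c))
  (y1 y2 y3 y4 y5 y6 y7 y8 y9 : 'M[C]_(b, c)) :
  x1 = A *m y1 -> x2 = A *m y2 -> x3 = A *m y3 -> x4 = A *m y4 -> x5 = A *m y5 ->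
  x6 = A *m y6 -> x7 = A *m y7 -> x8 = A *m y8 -> x9 = A *m y9 ->
  x1 + x2 + x3 + x4 + x5 + x6 + x7 + x8 + x9 =
  A *m (y1 + y2 + y3 + y4 + y5 + y6 + y7 + y8 + y9).
Proof. by move=> -> -> -> -> -> -> -> -> ->; rewrite !mulmxDr. Qed.

Lemma rhs3_red s1 s2 s3 :
  V *m g1 (redK V W Kf) (redB W Bf) s1 = g1 Kf Bf s1 ->
  V *m g1 (redK V W Kf) (redB W Bf) s2 = g1 Kf Bf s2 ->
  V *m g1 (redK V W Kf) (redB W Bf) s3 = g1 Kf Bf s3 ->
  V *m g2 (redK V W Kf) (redB W Bf) (redN V W Nf) (redH V W Hf) s1 s2 = g2 Kf Bf Nf Hf s1 s2 ->
  V *m g2 (redK V W Kf) (redB W Bf) (redN V W Nf) (redH V W Hf) s1 s3 = g2 Kf Bf Nf Hf s1 s3 ->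
  V *m g2 (redK V W Kf) (redB W Bf) (redN V W Nf) (redH V W Hf) s2 s3 = g2 Kf Bf Nf Hf s2 s3 ->
  rhs3 (redK V W Kf) (redB W Bf) (redN V W Nf) (redH V W Hf) s1 s2 s3
  = ctmx W *m rhs3 Kf Bf Nf Hf s1 s2 s3.
Proof.
move=> e1 e2 e3 e12 e13 e23.
apply: sum9.
exact: tH' e12 e3.
exact: tH' e13 e2.
exact: tH' e23 e1.
exact: tHc' e1 e23.
exact: tHc' e2 e13.
exact: tHc' e3 e12.
exact: tNc' e12.
exact: tNc' e13.
exact: tNc' e23.
Qed.
End Red.

Lemma add9 (M : zmodType) (a b c : M) :
  a + a + a + b + b + b + c + c + c = (a + b + c) *+ 3.
Proof. by rewrite !mulrnDl !mulrSr !mulr0n !add0r !addrA. Qed.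

Lemma add4 (M : zmodType) (a b : M) : a + a + b + b = (a + b) *+ 2.
Proof. by rewrite !mulrnDl !mulrSr !mulr0n !add0r !addrA. Qed.

Section Main.
Variable (n m p r : nat) (V W : 'M[C]_(n, r)).
Variable (Cf : C -> 'M[C]_(p, n)) (Kf : C -> 'M[C]_n) (Bf : C -> 'M[C]_(n, m))
         (Nf : C -> 'M[C]_(n, m * n)) (Hf : C -> C -> 'M[C]_(n, n * n)).
Notation rC := (redC V Cf). Notation rK := (redK V W Kf).
Notation rB := (redB W Bf). Notation rN := (redN V W Nf). Notation rH := (redH V W Hf).

Lemma H1 s : Kf s \in unitmx -> rK s \in unitmx ->
  colspan_sub (g1 Kf Bf s) V -> V *m g1 rK rB s = g1 Kf Bf s.
Proof. by move=> u1 u2 /colspanP [X hX]; exact: (L1 u1 u2 hX). Qed.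

Lemma H2 s : Kf (s + s) \in unitmx -> rK (s + s) \in unitmx ->
  V *m g1 rK rB s = g1 Kf Bf s ->
  (exists X, invmx (Kf (s + s)) *m rhs2 Kf Bf Nf Hf s s = V *m X) ->
  V *m g2 rK rB rN rH s s = g2 Kf Bf Nf Hf s s.
Proof.
move=> u1 u2 e1 [X hX].
change (V *m (2%:R^-1 *: (invmx (rK (s+s)) *m rhs2 rK rB rN rH s s))
  = 2%:R^-1 *: (invmx (Kf (s+s)) *m rhs2 Kf Bf Nf Hf s s)).
by rewrite (rhs2_red Nf Hf e1 e1) -scalemxAr (L1 u1 u2 hX).
Qed.

Lemma H3 s : Kf (s + s + s) \in unitmx -> rK (s + s + s) \in unitmx ->
  V *m g1 rK rB s = g1 Kf Bf s ->
  V *m g2 rK rB rN rH s s = g2 Kf Bf Nf Hf s s ->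
  (exists X, invmx (Kf (s + s + s)) *m rhs3 Kf Bf Nf Hf s s s = V *m X) ->
  V *m g3 rK rB rN rH s s s = g3 Kf Bf Nf Hf s s s.
Proof.
move=> u1 u2 e1 e2 [X hX].
change (V *m (6%:R^-1 *: (invmx (rK (s+s+s)) *m rhs3 rK rB rN rH s s s))
  = 6%:R^-1 *: (invmx (Kf (s+s+s)) *m rhs3 Kf Bf Nf Hf s s s)).
by rewrite (rhs3_red e1 e1 e1 e2 e2 e2) -scalemxAr (L1 u1 u2 hX).
Qed.

Lemma GV1 s : V *m g1 rK rB s = g1 Kf Bf s -> G1 Cf Kf Bf s = G1 rC rK rB s.
Proof.
move=> e; change (Cf s *m g1 Kf Bf s = Cf s *m V *m g1 rK rB s).
by rewrite -mulmxA e.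
Qed.

Lemma GV2 s : V *m g2 rK rB rN rH s s = g2 Kf Bf Nf Hf s s ->
  G2 Cf Kf Bf Nf Hf s s = G2 rC rK rB rN rH s s.
Proof.
move=> e; change (Cf (s+s) *m g2 Kf Bf Nf Hf s s = Cf (s+s) *m V *m g2 rK rB rN rH s s).
by rewrite -mulmxA e.
Qed.

Lemma GV3 s : V *m g3 rK rB rN rH s s s = g3 Kf Bf Nf Hf s s s ->
  G3 Cf Kf Bf Nf Hf s s s = G3 rC rK rB rN rH s s s.
Proof.
move=> e; change (Cf (s+s+s) *m g3 Kf Bf Nf Hf s s s
  = Cf (s+s+s) *m V *m g3 rK rB rN rH s s s).
by rewrite -mulmxA e.
Qed.

Lemma GW1 s : Kf s \in unitmx -> rK s \in unitmx ->
  colspan_sub (ctmx (invmx (Kf s)) *m ctmx (Cf s)) W ->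
  G1 Cf Kf Bf s = G1 rC rK rB s.
Proof.
move=> u1 u2 /colspanP [Z hZ].
change (Cf s *m (invmx (Kf s) *m Bf s) =
  Cf s *m V *m (invmx (ctmx W *m Kf s *m V) *m (ctmx W *m Bf s))).
by rewrite (L2 _ u1 u2 hZ).
Qed.

Lemma GW2 s : Kf (s + s) \in unitmx -> rK (s + s) \in unitmx ->
  V *m g1 rK rB s = g1 Kf Bf s ->
  colspan_sub (ctmx (invmx (Kf (s + s))) *m ctmx (Cf (s + s))) W ->
  G2 Cf Kf Bf Nf Hf s s = G2 rC rK rB rN rH s s.
Proof.
move=> u1 u2 e1 /colspanP [Z hZ].
change (Cf (s+s) *m (2%:R^-1 *: (invmx (Kf (s+s)) *m rhs2 Kf Bf Nf Hf s s)) =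
  Cf (s+s) *m V *m (2%:R^-1 *: (invmx (rK (s+s)) *m rhs2 rK rB rN rH s s))).
rewrite (rhs2_red Nf Hf e1 e1) -!scalemxAr.
by rewrite (L2 _ u1 u2 hZ).
Qed.

Lemma GW3 s : Kf (s + s + s) \in unitmx -> rK (s + s + s) \in unitmx ->
  V *m g1 rK rB s = g1 Kf Bf s ->
  V *m g2 rK rB rN rH s s = g2 Kf Bf Nf Hf s s ->
  colspan_sub (ctmx (invmx (Kf (s + s + s))) *m ctmx (Cf (s + s + s))) W ->
  G3 Cf Kf Bf Nf Hf s s s = G3 rC rK rB rN rH s s s.
Proof.
move=> u1 u2 e1 e2 /colspanP [Z hZ].
change (Cf (s+s+s) *m (6%:R^-1 *: (invmx (Kf (s+s+s)) *m rhs3 Kf Bf Nf Hf s s s)) =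
  Cf (s+s+s) *m V *m (6%:R^-1 *: (invmx (rK (s+s+s)) *m rhs3 rK rB rN rH s s s))).
rewrite (rhs3_red e1 e1 e1 e2 e2 e2) -!scalemxAr.
by rewrite (L2 _ u1 u2 hZ).
Qed.
End Main.
End H.

Unset Implicit Arguments. Set Strict Implicit.
Theorem theorem4p3 (C : numClosedFieldType) (n m p r : nat)
  (Cf : C -> 'M[C]_(p, n)) (Kf : C -> 'M[C]_n) (Bf : C -> 'M[C]_(n, m))
  (Nf : C -> 'M[C]_(n, m * n)) (Hf : C -> C -> 'M[C]_(n, n * n))
  (V W : 'M[C]_(n, r)) (sigma : C) :
  \rank V = r -> \rank W = r ->
  Kf sigma \in unitmx -> Kf (2%:R * sigma) \in unitmx -> Kf (3%:R * sigma) \in unitmx ->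
  redK V W Kf sigma \in unitmx ->
  redK V W Kf (2%:R * sigma) \in unitmx ->
  redK V W Kf (3%:R * sigma) \in unitmx ->
  let rC := redC V Cf in let rK := redK V W Kf in let rB := redB W Bf in
  let rN := redN V W Nf in let rH := redH V W Hf in
  [/\
   (* (a) *)
   (colspan_sub (Vi1 Kf Bf sigma) V ->
    colspan_sub (Vi2 Kf Bf Nf Hf sigma) V ->
    colspan_sub (Vi3 Kf Bf Nf Hf sigma) V ->
      [/\ G1 Cf Kf Bf sigma = G1 rC rK rB sigma,
          G2 Cf Kf Bf Nf Hf sigma sigma = G2 rC rK rB rN rH sigma sigma &
          G3 Cf Kf Bf Nf Hf sigma sigma sigma = G3 rC rK rB rN rH sigma sigma sigma]),
   (* (b) *)
   (colspan_sub (Vi1 Kf Bf sigma) V ->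
    colspan_sub (Wi1 Cf Kf sigma) W ->
      [/\ G1 Cf Kf Bf sigma = G1 rC rK rB sigma,
          G1 Cf Kf Bf (2%:R * sigma) = G1 rC rK rB (2%:R * sigma) &
          G2 Cf Kf Bf Nf Hf sigma sigma = G2 rC rK rB rN rH sigma sigma]) &
   (* (c) *)
   (colspan_sub (Vi1 Kf Bf sigma) V ->
    colspan_sub (Vi2 Kf Bf Nf Hf sigma) V ->
    colspan_sub (Wi2 Cf Kf sigma) W ->
      [/\ G1 Cf Kf Bf sigma = G1 rC rK rB sigma,
          G1 Cf Kf Bf (3%:R * sigma) = G1 rC rK rB (3%:R * sigma),
          G2 Cf Kf Bf Nf Hf sigma sigma = G2 rC rK rB rN rH sigma sigma &
          G3 Cf Kf Bf Nf Hf sigma sigma sigma = G3 rC rK rB rN rH sigma sigma sigma])].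
Proof.
move=> _ _ uK1 uK2 uK3 uR1 uR2 uR3 rC rK rB rN rH.
rewrite {}/rC {}/rK {}/rB {}/rN {}/rH.
have e2 : 2%:R * sigma = sigma + sigma by rewrite mulr_natl mulr2n.
have e3 : 3%:R * sigma = sigma + sigma + sigma by rewrite mulr_natl !mulrSr mulr0n add0r.
have uK2' : Kf (sigma + sigma) \in unitmx by rewrite -e2.
have uR2' : redK V W Kf (sigma + sigma) \in unitmx by rewrite -e2.
have uK3' : Kf (sigma + sigma + sigma) \in unitmx by rewrite -e3.
have uR3' : redK V W Kf (sigma + sigma + sigma) \in unitmx by rewrite -e3.
have rhs2E : rhs2 Kf Bf Nf Hf sigma sigma = 2%:R *: (Hf sigma sigma *m (Vi1 Kf Bf sigma *t Vi1 Kf Bf sigma) + Nf sigma *m (1%:M *t Vi1 Kf Bf sigma)).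
  by rewrite scaler_nat -add4.
have hV2X : colspan_sub (Vi2 Kf Bf Nf Hf sigma) V ->
    exists X, invmx (Kf (sigma + sigma)) *m rhs2 Kf Bf Nf Hf sigma sigma = V *m X.
  move=> /colspanP [Y hY]; exists (2%:R *: Y); rewrite rhs2E -!scalemxAr; congr (_ *: _).
  by move: hY; rewrite /Vi2 e2 => <-.
have g2Vi2 : g2 Kf Bf Nf Hf sigma sigma = Vi2 Kf Bf Nf Hf sigma.
  change (2%:R^-1 *: (invmx (Kf (sigma + sigma)) *m rhs2 Kf Bf Nf Hf sigma sigma) = Vi2 Kf Bf Nf Hf sigma).
  by rewrite rhs2E -scalemxAr scalerA mulVf ?pnatr_eq0 // scale1r /Vi2 e2.
have rhs3E : rhs3 Kf Bf Nf Hf sigma sigma sigma = 3%:R *: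
   (Hf (sigma + sigma) sigma *m (g2 Kf Bf Nf Hf sigma sigma *t g1 Kf Bf sigma)
    + cast3 (Hf sigma (sigma + sigma) *m (g1 Kf Bf sigma *t g2 Kf Bf Nf Hf sigma sigma))
    + cast3 (Nf (sigma + sigma) *m (1%:M *t g2 Kf Bf Nf Hf sigma sigma))).
  by rewrite scaler_nat -add9.
have hV3X : colspan_sub (Vi3 Kf Bf Nf Hf sigma) V ->
    exists X, invmx (Kf (sigma + sigma + sigma)) *m rhs3 Kf Bf Nf Hf sigma sigma sigma = V *m X.
  move=> /colspanP [Y hY]; exists (3%:R *: Y); rewrite rhs3E -!scalemxAr g2Vi2; congr (_ *: _).
  by move: hY; rewrite /Vi3 e3 e2 => <-.
split.
- move=> hv1 hv2 hv3.
  have h1 := H1 uK1 uR1 hv1.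
  have h2 := H2 uK2' uR2' h1 (hV2X hv2).
  have h3 := H3 uK3' uR3' h1 h2 (hV3X hv3).
  split; [exact: GV1 h1 | exact: GV2 h2 | exact: GV3 h3].
- move=> hv1 hw1.
  have h1 := H1 uK1 uR1 hv1.
  have hw1' : colspan_sub (ctmx (invmx (Kf (sigma + sigma))) *m ctmx (Cf (sigma + sigma))) W.
    by rewrite -e2.
  split; [exact: GV1 h1 | exact: GW1 uK2 uR2 hw1 | exact: GW2 uK2' uR2' h1 hw1'].
- move=> hv1 hv2 hw2.
  have h1 := H1 uK1 uR1 hv1.
  have h2 := H2 uK2' uR2' h1 (hV2X hv2).
  have hw2' : colspan_sub (ctmx (invmx (Kf (sigma + sigma + sigma))) *m ctmx (Cf (sigma + sigma + sigma))) W.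
    by rewrite -e3.
  split; [exact: GV1 h1 | exact: GW1 uK3 uR3 hw2 | exact: GV2 h2 | exact: GW3 uK3' uR3' h1 h2 hw2'].
Qed.
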